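(* There is a constant $c>0$ such that for every $n\ge1$: (i) there is a formula $\phi\in\mathrm{LTL}[\mathsf F]$ with $\mathrm{size}(\phi)\le c\,n$ and $\mathcal L^\omega(\phi)=\mathcal L(\Phi_n)^-\cdot\Sigma^\omega$; and (ii) for every formula $\psi\in\mathsf F(\mathrm{LTL}[\mathsf Y,\mathsf{wY},\mathsf O,\mathsf H])$, if $\mathcal L^\omega(\psi)=\mathcal L(\Phi_n)^-\cdot\Sigma^\omega$ then $\mathrm{size}(\psi)\ge2^n$.
   Context: Fix $n\ge1$ and atomic propositions $AP=\{\tilde p,\tilde q\}\cup\{p_1,\dots,p_n\}\cup\{q_1,\dots,q_n\}$ (distinct), $\Sigma=2^{AP}$. Formulae (negation normal form) are built from literals $p,\neg p$ with $\land,\lor$ and operators $\mathsf X,\mathsf{wX},\mathsf F,\mathsf G,\mathsf Y,\mathsf{wY},\mathsf O,\mathsf H$. Finite-trace semantics on $\sigma\in\Sigma^+$, positions $0\le i<|\sigma|$: $\mathsf X\phi$: $i+1<|\sigma|$ and $\phi$ at $i+1$; $\mathsf{wX}\phi$: $i+1=|\sigma|$ or $\phi$ at $i+1$; $\mathsf F\phi$/$\mathsf G\phi$: $\phi$ at some/every $j$ with $i\le j<|\sigma|$; $\mathsf Y\phi$: $i>0$ and $\phi$ at $i-1$; $\mathsf{wY}\phi$: $i=0$ or $\phi$ at $i-1$; $\mathsf O\phi$/$\mathsf H\phi$: $\phi$ at some/every $0\le j\le i$; $\mathcal L(\phi)=\{\sigma\in\Sigma^+:\sigma,0\models\phi\}$.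 Infinite-trace semantics on $\sigma\in\Sigma^\omega$, positions $i\in\mathbb N$: same clauses except $\mathsf X\phi$ and $\mathsf{wX}\phi$ both mean $\phi$ at $i+1$, and $\mathsf F\phi$/$\mathsf G\phi$ mean $\phi$ at some/every $j\ge i$; $\mathcal L^\omega(\phi)=\{\sigma\in\Sigma^\omega:\sigma,0\models\phi\}$. Size: literals 1, unary operators add 1, binary connectives sum plus 1. $\mathrm{LTL}[S]$: formulae whose temporal operators are in $S$; $\mathsf F(\mathrm{LTL}[S])$: formulae $\mathsf F(\alpha)$ with $\alpha\in\mathrm{LTL}[S]$. The reverse $\sigma^-$ of $\sigma\in\Sigma^+$ satisfies $|\sigma^-|=|\sigma|$ and $\sigma^-[i]=\sigma[|\sigma|-1-i]$; $\mathcal L^-=\{\sigma^-:\sigma\in\mathcal L\}$; $\mathcal L\cdot\Sigma^\omega=\{\sigma\sigma':\sigma\in\mathcal L,\sigma'\in\Sigma^\omega\}$. $\Phi_n := \mathsf{F}\big(\tilde q\land\bigwedge_{i=1}^n\big((q_i\land\mathsf{O}(\tilde p\land p_i))\lor(\neg q_i\land\mathsf{O}(\tilde p\land\neg p_i))\big)\big)$. *)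

(* Defs.v *)
From mathcomp Require Import all_boot.
Set Implicit Arguments. Unset Strict Implicit. Unset Printing Implicit Defensive.

(* Atomic propositions AP = {~p, ~q} ∪ {p_1..p_n} ∪ {q_1..q_n} (distinct). *)
Inductive AP (n : nat) : Type :=
| Ptil : AP n
| Qtil : AP n
| Pi : 'I_n -> AP n
| Qi : 'I_n -> AP n.

Definition letter (n : nat) := AP n -> bool.

(* LTL formulae in negation normal form over atoms of type A. *)
Inductive form (A : Type) : Type :=
| Lit : A -> bool -> form A          (* Lit a true = a, Lit a false = ¬a *)
| And : form A -> form A -> form A
| Or  : form A -> form A -> form A
| Xn  : form A -> form A
| WX  : form A -> form A
| Fn  : form A -> form A
| Gn  : form A -> form A
| Yn  : form A -> form A
| WY  : form A -> form A
| On  : form A -> form A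
| Hn  : form A -> form A.

Arguments Lit {A}.

Fixpoint fsize A (f : form A) : nat :=
  match f with
  | Lit _ _ => 1
  | And a b | Or a b => fsize a + fsize b + 1
  | Xn a | WX a | Fn a | Gn a | Yn a | WY a | On a | Hn a => fsize a + 1
  end.

Fixpoint in_LTL_F A (f : form A) : Prop :=
  match f with
  | Lit _ _ => True
  | And a b | Or a b => in_LTL_F a /\ in_LTL_F b
  | Fn a => in_LTL_F a
  | _ => False
  end.

Fixpoint in_LTL_past A (f : form A) : Prop :=
  match f with
  | Lit _ _ => True
  | And a b | Or a b => in_LTL_past a /\ in_LTL_past b
  | Yn a | WY a | On a | Hn a => in_LTL_past a
  | _ => False
  end.

Definition in_F_past A (f : form A) : Prop :=
  exists alpha, f = Fn alpha /\ in_LTL_past alpha.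

Fixpoint sat_fin A (s : seq (A -> bool)) (i : nat) (f : form A) : Prop :=
  match f with
  | Lit a b => nth (fun _ => false) s i a = b
  | And a b => sat_fin s i a /\ sat_fin s i b
  | Or a b => sat_fin s i a \/ sat_fin s i b
  | Xn a => i.+1 < size s /\ sat_fin s i.+1 a
  | WX a => i.+1 = size s \/ sat_fin s i.+1 a
  | Fn a => exists j, i <= j /\ j < size s /\ sat_fin s j a
  | Gn a => forall j, i <= j -> j < size s -> sat_fin s j a
  | Yn a => 0 < i /\ sat_fin s i.-1 a
  | WY a => i = 0 \/ sat_fin s i.-1 a
  | On a => exists j, j <= i /\ sat_fin s j a
  | Hn a => forall j, j <= i -> sat_fin s j a
  end.

Fixpoint sat_inf A (w : nat -> (A -> bool)) (i : nat) (f : form A) : Prop :=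
  match f with
  | Lit a b => w i a = b
  | And a b => sat_inf w i a /\ sat_inf w i b
  | Or a b => sat_inf w i a \/ sat_inf w i b
  | Xn a => sat_inf w i.+1 a
  | WX a => sat_inf w i.+1 a
  | Fn a => exists j, i <= j /\ sat_inf w j a
  | Gn a => forall j, i <= j -> sat_inf w j a
  | Yn a => 0 < i /\ sat_inf w i.-1 a
  | WY a => i = 0 \/ sat_inf w i.-1 a
  | On a => exists j, j <= i /\ sat_inf w j a
  | Hn a => forall j, j <= i -> sat_inf w j a
  end.

Definition lang_fin A (f : form A) (s : seq (A -> bool)) : Prop :=
  0 < size s /\ sat_fin s 0 f.

(* L^- = { σ^- : σ ∈ L } ; σ ∈ L^- iff rev σ ∈ L. *)
Definition rev_lang A (L : seq (A -> bool) -> Prop) (s : seq (A -> bool)) : Prop :=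
  exists t, L t /\ s = rev t.

Definition concat_omega A (L : seq (A -> bool) -> Prop) (w : nat -> (A -> bool)) : Prop :=
  exists u (w' : nat -> (A -> bool)), L u /\
    forall i a, w i a = (if i < size u then nth (fun _ => false) u i a else w' (i - size u) a).

Fixpoint bigAnd A (d : form A) (l : seq (form A)) : form A :=
  match l with
  | [::] => d
  | [:: x] => x
  | x :: l' => And x (bigAnd d l')
  end.

(* Φ_n = F(~q ∧ ⋀_{i=1}^n ((q_i ∧ O(~p ∧ p_i)) ∨ (¬q_i ∧ O(~p ∧ ¬p_i)))) *)
Definition Phi_conj (n : nat) (i : 'I_n) : form (AP n) :=
  Or (And (Lit (Qi i) true) (On (And (Lit (@Ptil n) true) (Lit (Pi i) true))))
     (And (Lit (Qi i) false) (On (And (Lit (@Ptil n) true) (Lit (Pi i) false)))).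

Definition Phi (n : nat) : form (AP n) :=
  Fn (match [seq Phi_conj i | i <- enum 'I_n] with
      | [::] => Lit (@Qtil n) true
      | l => And (Lit (@Qtil n) true) (bigAnd (Lit (@Qtil n) true) l)
      end).

(* Main.v *)
Require Import Defs.
From mathcomp Require Import all_boot zify.
From Stdlib Require ClassicalEpsilon.

Lemma card_setT' (T : finType) : #|{set T}| = 2 ^ #|T|.
Proof. by have := card_powerset [set: T]; rewrite powersetT !cardsT. Qed.

Section BA.
Variable A : Type.

Lemma sat_inf_bigAnd (I : eqType) w j (d : form A) (f : I -> form A) (s : seq I) :
  s != [::] -> (sat_inf w j (bigAnd d (map f s)) <-> forall i, i \in s -> sat_inf w j (f i)).
Proof.
elim: s => [//|x s IH] _ /=.
case: s IH => [|y s] IH /=.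
  by split=> [H i|H]; [rewrite inE => /eqP -> | apply: H; rewrite inE].
have := IH isT => /= IH'.
split=> [[H1 H2] i|H].
  rewrite inE => /orP [/eqP -> //|Hi]; exact: (proj1 IH' H2).
split; first by apply: H; rewrite inE eqxx.
apply/IH' => i Hi; apply: H; by rewrite inE Hi orbT.
Qed.

Lemma sat_fin_bigAnd (I : eqType) w j (d : form A) (f : I -> form A) (s : seq I) :
  s != [::] -> (sat_fin w j (bigAnd d (map f s)) <-> forall i, i \in s -> sat_fin w j (f i)).
Proof.
elim: s => [//|x s IH] _ /=.
case: s IH => [|y s] IH /=.
  by split=> [H i|H]; [rewrite inE => /eqP -> | apply: H; rewrite inE].
have := IH isT => /= IH'.
split=> [[H1 H2] i|H].
  rewrite inE => /orP [/eqP -> //|Hi]; exact: (proj1 IH' H2).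
split; first by apply: H; rewrite inE eqxx.
apply/IH' => i Hi; apply: H; by rewrite inE Hi orbT.
Qed.

Lemma bigAnd_LTL_F (I : eqType) (d : form A) (f : I -> form A) (s : seq I) :
  in_LTL_F d -> (forall i, in_LTL_F (f i)) -> in_LTL_F (bigAnd d (map f s)).
Proof.
move=> Hd Hf; elim: s => [//|x s IH] /=.
by case: s IH => [|y s] IH //=; split.
Qed.

Lemma bigAnd_size (I : eqType) (d : form A) (f : I -> form A) (s : seq I) :
  (forall i, fsize (f i) = 13) -> s != [::] -> (fsize (bigAnd d (map f s))).+1 = 14 * size s.
Proof.
move=> Hf; elim: s => [//|x s IH] _ /=.
case: s IH => [|y s] IH /=; first by rewrite Hf.
have := IH isT; rewrite /= Hf => H; lia.
Qed.
End BA.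

Definition d0 n : letter n := fun _ => false.

Definition Good n (w : nat -> letter n) := exists j, w j (@Qtil n) = true /\
  forall i, exists k, j <= k /\ w k (@Ptil n) = true /\ w k (Pi i) = w j (Qi i).

Lemma enum_ne n : 0 < n -> enum 'I_n != [::].
Proof. move=> Hn; apply/eqP => E; have := size_enum_ord n; rewrite E /=; lia. Qed.

Lemma Phi_fin n (t : seq (letter n)) : 0 < n ->
  (sat_fin t 0 (Phi n) <-> exists j, j < size t /\ nth (fun _ : AP n => false) t j (@Qtil n) = true /\
     forall i, exists k, k <= j /\ nth (fun _ : AP n => false) t k (@Ptil n) = true /\
        nth (fun _ : AP n => false) t k (Pi i) = nth (fun _ : AP n => false) t j (Qi i)).
Proof.
move=> Hn; rewrite /Phi.
case E: [seq Phi_conj i | i <- enum 'I_n] => [|x l].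
  by have := size_map (@Phi_conj n) (enum 'I_n); rewrite E size_enum_ord /=; lia.
rewrite -E /=; split.
- move=> [j [_ [Hj [Hq Hb]]]]; exists j; split=> //; split=> // i.
  have := (proj1 (sat_fin_bigAnd _ _ _ _ _ _ _ (enum_ne n Hn)) Hb i (mem_enum _ i)).
  rewrite /Phi_conj /= => [[[Hqi [k [Hk [Hp Hpi]]]]|[Hqi [k [Hk [Hp Hpi]]]]]];
    exists k; by rewrite Hqi Hpi.
- move=> [j [Hj [Hq Hb]]]; exists j; split=> //; split=> //; split=> //.
  apply/(sat_fin_bigAnd _ _ _ _ _ _ _ (enum_ne n Hn)) => i _.
  have [k [Hk [Hp Hpi]]] := Hb i.
  rewrite /Phi_conj /=.
  case E2: (nth _ t j (Qi i)).
    by left; split=> //; exists k; rewrite Hpi E2.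
  by right; split=> //; exists k; rewrite Hpi E2.
Qed.

Definition conjF n (i : 'I_n) : form (AP n) :=
  Or (And (Lit (Qi i) true) (Fn (And (Lit (@Ptil n) true) (Lit (Pi i) true))))
     (And (Lit (Qi i) false) (Fn (And (Lit (@Ptil n) true) (Lit (Pi i) false)))).

Definition phiF n : form (AP n) :=
  Fn (And (Lit (@Qtil n) true) (bigAnd (Lit (@Qtil n) true) [seq conjF n i | i <- enum 'I_n])).

Lemma phiF_Good n w : 0 < n -> (sat_inf w 0 (phiF n) <-> Good n w).
Proof.
move=> Hn; rewrite /phiF /=; split.
- move=> [j [_ [Hq Hb]]]; exists j; split=> // i.
  have := (proj1 (sat_inf_bigAnd _ _ _ _ _ _ _ (enum_ne n Hn)) Hb i (mem_enum _ i)).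
  rewrite /conjF /= => [[[Hqi [k [Hk [Hp Hpi]]]]|[Hqi [k [Hk [Hp Hpi]]]]]];
    exists k; by rewrite Hqi Hpi.
- move=> [j [Hq Hb]]; exists j; split=> //; split=> //.
  apply/(sat_inf_bigAnd _ _ _ _ _ _ _ (enum_ne n Hn)) => i _.
  have [k [Hk [Hp Hpi]]] := Hb i.
  rewrite /conjF /=.
  case E2: (w j (Qi i)).
    by left; split=> //; exists k; rewrite Hpi E2.
  by right; split=> //; exists k; rewrite Hpi E2.
Qed.

Lemma fin_choice n (P : 'I_n -> nat -> Prop) :
  (forall i, exists k, P i k) -> exists m, forall i, exists k, k <= m /\ P i k.
Proof.
move=> H.
suff [m Hm] : exists m, forall i, i \in enum 'I_n -> exists k, k <= m /\ P i k.
  by exists m => i; apply: Hm; rewrite mem_enum.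
elim: (enum 'I_n) => [|x s [m Hm]]; first by exists 0.
have [k Hk] := H x.
exists (maxn m k) => i; rewrite inE => /orP [/eqP ->|Hi].
  by exists k; split=> //; rewrite leq_maxr.
have [k' [Hk' HP]] := Hm i Hi; exists k'; split=> //; lia.
Qed.

Lemma concat_Good n w : 0 < n ->
  (concat_omega (rev_lang (lang_fin (Phi n))) w <-> Good n w).
Proof.
move=> Hn; split.
- move=> [u [w' [[t [[Hsz Hsat] Eu]] Hw]]]; subst u.
  have Hpos : forall x a, x < size t -> w (size t - x.+1) a = nth (fun _ : AP n => false) t x a.
    move=> x a Hx; rewrite Hw size_rev ifT; last lia.
    rewrite nth_rev; last lia.
    by have -> : size t - (size t - x.+1).+1 = x by lia.
  have [j [Hj [Hq Hb]]] := (proj1 (Phi_fin n t Hn) Hsat).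
  exists (size t - j.+1); split; first by rewrite Hpos.
  move=> i; have [k [Hk [Hp Hpi]]] := Hb i.
  exists (size t - k.+1); split; first lia.
  have Hkt : k < size t by apply: leq_ltn_trans Hk Hj.
  by rewrite !Hpos.
- move=> [j [Hq Hb]].
  have [m Hm] := fin_choice n _ Hb.
  set M := maxn m j.
  exists (mkseq w M.+1), (fun i => w (i + M.+1)); split.
    exists (rev (mkseq w M.+1)); rewrite revK; split=> //.
    have Hr : forall x, x < M.+1 -> nth (fun _ : AP n => false) (rev (mkseq w M.+1)) x = w (M - x).
      move=> x Hx; rewrite nth_rev size_mkseq // nth_mkseq; last lia.
      by have -> : M.+1 - x.+1 = M - x by lia.
    split; first by rewrite size_rev size_mkseq.
    apply/(Phi_fin n _ Hn); exists (M - j); rewrite size_rev size_mkseq.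
    split; first lia.
    rewrite Hr; last lia.
    have -> : M - (M - j) = j by lia.
    split=> // i.
    have [k [HkM [Hjk [Hp Hpi]]]] := Hm i.
    exists (M - k); split; first lia.
    rewrite !Hr; try lia.
    by have -> : M - (M - k) = k by lia.
  move=> i a; rewrite size_mkseq; case: ifP => Hi.
    by rewrite nth_mkseq.
  by rewrite subnK //; lia.
Qed.
Section Past.
Variable A : Type.
Implicit Types (w : nat -> A -> bool) (f : form A).

Lemma On_succ w t f : sat_inf w t.+1 (On f) <-> sat_inf w t.+1 f \/ sat_inf w t (On f).
Proof.
split=> /=.
- move=> [j [Hj H]]; case: (ltnP j t.+1) => Hlt; first by right; exists j.
  have Ej : j = t.+1 by apply/eqP; rewrite eqn_leq Hj Hlt.
  by left; rewrite -Ej.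
- move=> [H|[j [Hj H]]]; first by exists t.+1.
  by exists j; split=> //; apply: leqW.
Qed.

Lemma Hn_succ w t f : sat_inf w t.+1 (Hn f) <-> sat_inf w t.+1 f /\ sat_inf w t (Hn f).
Proof.
split=> /=.
- move=> H; split; first exact: H.
  by move=> j Hj; apply: H; apply: leqW.
- move=> [H1 H2] j; rewrite leq_eqVlt => /orP [/eqP ->//|Hj]; exact: H2.
Qed.

Lemma locality f : in_LTL_past f -> forall w1 w2 t,
  (forall j a, j <= t -> w1 j a = w2 j a) -> (sat_inf w1 t f <-> sat_inf w2 t f).
Proof.
elim: f => //=.
- move=> a b _ w1 w2 t H; by rewrite H.
- move=> f IHf g IHg [Hf Hg] w1 w2 t H.
  by rewrite (IHf Hf w1 w2 t H) (IHg Hg w1 w2 t H).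
- move=> f IHf g IHg [Hf Hg] w1 w2 t H.
  by rewrite (IHf Hf w1 w2 t H) (IHg Hg w1 w2 t H).
- move=> f IHf Hf w1 w2 t H.
  rewrite (IHf Hf w1 w2 t.-1) //. move=> j a Hj; apply: H; apply: (leq_trans Hj); exact: leq_pred.
- move=> f IHf Hf w1 w2 t H.
  rewrite (IHf Hf w1 w2 t.-1) //. move=> j a Hj; apply: H; apply: (leq_trans Hj); exact: leq_pred.
- move=> f IHf Hf w1 w2 t H; split=> [[j [Hj Hs]]|[j [Hj Hs]]]; exists j; split=> //.
  + apply/(IHf Hf w1 w2 j) => // k a Hk; apply: H; exact: leq_trans Hk Hj.
  + apply/(IHf Hf w1 w2 j) => // k a Hk; apply: H; exact: leq_trans Hk Hj.
- move=> f IHf Hf w1 w2 t H; split=> Hs j Hj.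
  + apply/(IHf Hf w1 w2 j) => [k a Hk|]; [apply: H; exact: leq_trans Hk Hj|exact: Hs].
  + apply/(IHf Hf w1 w2 j) => [k a Hk|]; [apply: H; exact: leq_trans Hk Hj|exact: Hs].
Qed.

Definition tv w t f : bool :=
  if ClassicalEpsilon.excluded_middle_informative (sat_inf w t f) then true else false.

Lemma tvP w1 t1 w2 t2 f : tv w1 t1 f = tv w2 t2 f <-> (sat_inf w1 t1 f <-> sat_inf w2 t2 f).
Proof.
rewrite /tv; case: ClassicalEpsilon.excluded_middle_informative => H1;
case: ClassicalEpsilon.excluded_middle_informative => H2; split => E //; try tauto; exfalso; tauto.
Qed.

Fixpoint prof w t f : seq bool := tv w t f ::
  match f with
  | Lit _ _ => [::]
  | And a b | Or a b => prof w t a ++ prof w t b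
  | Xn a | WX a | Fn a | Gn a | Yn a | WY a | On a | Hn a => prof w t a
  end.

Lemma size_prof w t f : size (prof w t f) = fsize f.
Proof. elim: f => /= [? ?|a Ha b Hb|a Ha b Hb|a H|a H|a H|a H|a H|a H|a H|a H]; rewrite ?size_cat ?Ha ?Hb ?H ?addn1 //. Qed.

Fixpoint agr w1 t1 w2 t2 f : Prop := (sat_inf w1 t1 f <-> sat_inf w2 t2 f) /\
  match f with
  | Lit _ _ => True
  | And a b | Or a b => agr w1 t1 w2 t2 a /\ agr w1 t1 w2 t2 b
  | Xn a | WX a | Fn a | Gn a | Yn a | WY a | On a | Hn a => agr w1 t1 w2 t2 a
  end.

Lemma prof_agr w1 t1 w2 t2 f : prof w1 t1 f = prof w2 t2 f -> agr w1 t1 w2 t2 f.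
Proof.
elim: f => [a b|a IHa b IHb|a IHa b IHb|a IH|a IH|a IH|a IH|a IH|a IH|a IH|a IH] [E1];
  try (by move=> E; split; [apply/tvP|apply: IH]);
  try (by split; [apply/tvP|]).
- move=> /eqP; rewrite eqseq_cat ?size_prof // => /andP [/eqP E2 /eqP E3].
  by split; [apply/tvP|split; [apply: IHa|apply: IHb]].
- move=> /eqP; rewrite eqseq_cat ?size_prof // => /andP [/eqP E2 /eqP E3].
  by split; [apply/tvP|split; [apply: IHa|apply: IHb]].
Qed.

Lemma prof_local f : in_LTL_past f -> forall w1 w2 t,
  (forall j a, j <= t -> w1 j a = w2 j a) -> prof w1 t f = prof w2 t f.
Proof.
move=> Hp w1 w2 t H.
have Ht : forall g, in_LTL_past g -> tv w1 t g = tv w2 t g.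
  by move=> g Hg; apply/tvP; apply: locality.
elim: f Hp => [a b|a IHa b IHb|a IHa b IHb|a IH|a IH|a IH|a IH|a IH|a IH|a IH|a IH] Hp;
  rewrite /= Ht //; try (by rewrite IH);
  try (by case: Hp => H1 H2; rewrite IHa ?IHb).
Qed.

Lemma agr_head w1 t1 w2 t2 f : agr w1 t1 w2 t2 f -> (sat_inf w1 t1 f <-> sat_inf w2 t2 f).
Proof. by case: f => [a b|a b|a b|a|a|a|a|a|a|a|a] []. Qed.
Arguments agr_head [w1 t1 w2 t2 f].

Lemma agr_step f : in_LTL_past f -> forall w1 t1 w2 t2,
  agr w1 t1 w2 t2 f -> (forall a, w1 t1.+1 a = w2 t2.+1 a) -> agr w1 t1.+1 w2 t2.+1 f.
Proof.
elim: f => //=.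
- by move=> a b _ w1 t1 w2 t2 _ H; rewrite H.
- move=> a IHa b IHb [Ha Hb] w1 t1 w2 t2 [_ [A1 A2]] H.
  have Ja := IHa Ha _ _ _ _ A1 H; have Jb := IHb Hb _ _ _ _ A2 H.
  by split; [rewrite (agr_head Ja) (agr_head Jb)|].
- move=> a IHa b IHb [Ha Hb] w1 t1 w2 t2 [_ [A1 A2]] H.
  have Ja := IHa Ha _ _ _ _ A1 H; have Jb := IHb Hb _ _ _ _ A2 H.
  by split; [rewrite (agr_head Ja) (agr_head Jb)|].
- move=> a IH Ha w1 t1 w2 t2 [_ A1] H; split; last exact: IH.
  by rewrite /= (agr_head A1).
- move=> a IH Ha w1 t1 w2 t2 [_ A1] H; split; last exact: IH.
  by rewrite /= (agr_head A1); split=> [[//|?]|[//|?]]; right.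
- move=> a IH Ha w1 t1 w2 t2 [I A1] H; have Ja := IH Ha _ _ _ _ A1 H.
  split=> //; change (sat_inf w1 t1.+1 (On a) <-> sat_inf w2 t2.+1 (On a)); have I' : sat_inf w1 t1 (On a) <-> sat_inf w2 t2 (On a) := I; rewrite !On_succ; by rewrite (agr_head Ja) I'.
- move=> a IH Ha w1 t1 w2 t2 [I A1] H; have Ja := IH Ha _ _ _ _ A1 H.
  split=> //; change (sat_inf w1 t1.+1 (Hn a) <-> sat_inf w2 t2.+1 (Hn a)); have I' : sat_inf w1 t1 (Hn a) <-> sat_inf w2 t2 (Hn a) := I; rewrite !Hn_succ; by rewrite (agr_head Ja) I'.
Qed.

Lemma agr_iter f : in_LTL_past f -> forall w1 t1 w2 t2,
  agr w1 t1 w2 t2 f -> (forall d a, w1 (t1 + d).+1 a = w2 (t2 + d).+1 a) ->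
  forall d, agr w1 (t1 + d) w2 (t2 + d) f.
Proof.
move=> Hp w1 t1 w2 t2 A0 H; elim=> [|d IH]; first by rewrite !addn0.
rewrite !addnS; exact: agr_step.
Qed.
End Past.
Set Implicit Arguments. Unset Strict Implicit.

Definition vec n := {ffun 'I_n -> bool}.
Definition blank n : letter n := fun _ => false.
Definition ql n (v : vec n) : letter n := fun a =>
  match a with Qtil => true | Qi i => v i | _ => false end.
Definition pl n (v : vec n) : letter n := fun a =>
  match a with Ptil => true | Pi i => v i | _ => false end.
Definition uS n (S : {set vec n}) : seq (letter n) := @blank n :: map (@ql n) (enum S).
Definition W n (S : {set vec n}) (o : option (vec n)) : nat -> letter n := fun i =>
  if i < #|S|.+1 then nth (@blank n) (uS S) i
  else if i == #|S|.+1 then (if o is Some v then pl v else @blank n) else @blank n.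

Lemma W_q n (S : {set vec n}) o j : j < #|S|.+1 -> W S o j (@Qtil n) = true ->
  exists x, x \in S /\ W S o j = ql x.
Proof.
move=> Hj; rewrite /W Hj /uS.
case: j Hj => [//|j] Hj /=.
have Hj' : j < size (enum S) by rewrite -cardE.
rewrite (nth_map [ffun _ => false]) // => _.
exists (nth [ffun _ => false] (enum S) j); split=> //.
by rewrite -mem_enum mem_nth.
Qed.

Lemma W_Good n S o : 0 < n -> Good n (W S o) -> exists v, o = Some v /\ v \in S.
Proof.
move=> Hn [j [Hq Hb]].
case: (ltnP j #|S|.+1) => Hj; last first.
  move: Hq; rewrite /W ltnNge Hj /=; case: (j == _) => //; by case: (o).
have [x [Hx Ex]] := W_q Hj Hq.
have Hk : forall i, exists v, o = Some v /\ v i = x i.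
  move=> i; have [k [Hjk [Hp Hpi]]] := Hb i.
  move: Hp Hpi; rewrite Ex /= /W.
  case: (ltnP k #|S|.+1) => Hk.
    case: k Hjk Hk => [|k] Hjk Hk /=; first by [].
    by rewrite /uS /= (nth_map [ffun _ => false]) // -cardE.
  case: (k == _) => //; case Eo: o => [v|//] /= _ H; by exists v.
have [v [Ev _]] := Hk (Ordinal Hn).
exists v; split=> //; suff -> : v = x by [].
apply/ffunP => i; have [v' [Ev' Hi]] := Hk i.
by move: Ev'; rewrite Ev => [[->]].
Qed.

Lemma W_Good' n (S : {set vec n}) v : v \in S -> Good n (W S (Some v)).
Proof.
move=> Hv.
have Hi : index v (enum S) < #|S| by rewrite cardE index_mem mem_enum.
exists (index v (enum S)).+1.
have Ej : W S (Some v) (index v (enum S)).+1 = ql v.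
  rewrite /W ifT // /uS /= (nth_map [ffun _ => false]) -?cardE // nth_index //.
  by rewrite mem_enum.
have Ek : W S (Some v) #|S|.+1 = pl v by rewrite /W ltnn eqxx.
rewrite Ej; split=> // i; exists #|S|.+1; rewrite Ek; split=> //.
exact: ltnW.
Qed.

Lemma key n (al : form (AP n)) (Ha : in_LTL_past al)
  (Lw : forall w, (exists j, sat_inf w j al) <-> Good n w) (Hn : 0 < n)
  (S S' : {set vec n}) v :
  prof _ (W S None) #|S| al = prof _ (W S' None) #|S'| al -> v \in S -> v \in S'.
Proof.
move=> Ep Hv.
have [j Hj] := proj2 (Lw _) (W_Good' Hv).
have Hloc : forall (T : {set vec n}) j a, j <= #|T| -> W T (Some v) j a = W T None j a.
  by move=> T i a Hi; rewrite /W ltnS Hi.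
case: (leqP j #|S|) => Hjs.
  have : sat_inf (W S None) j al.
    apply/(locality _ _ Ha (W S (Some v))) => // i a Hi; apply: Hloc; exact: leq_trans Hi Hjs.
  move=> H; have [v' [Ev' _]] := W_Good Hn (proj1 (Lw _) (ex_intro (fun k => sat_inf _ k al) j H)).
  by [].
have E2 : prof _ (W S (Some v)) #|S| al = prof _ (W S' (Some v)) #|S'| al.
  rewrite (prof_local _ _ Ha (W S (Some v)) (W S None)); last by move=> *; apply: Hloc.
  rewrite Ep (prof_local _ _ Ha (W S' None) (W S' (Some v))) //.
  by move=> *; rewrite Hloc.
have Ag := agr_iter _ _ Ha _ _ _ _ (prof_agr _ _ _ _ _ _ E2).
have Hlet : forall d a, W S (Some v) (#|S| + d).+1 a = W S' (Some v) (#|S'| + d).+1 a.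
  move=> d a; rewrite /W.
  have -> : ((#|S| + d).+1 < #|S|.+1) = false by lia.
  have -> : ((#|S'| + d).+1 < #|S'|.+1) = false by lia.
  have -> : ((#|S| + d).+1 == #|S|.+1) = (d == 0) by lia.
  by have -> : ((#|S'| + d).+1 == #|S'|.+1) = (d == 0) by lia.
have Hd := @agr_head _ _ _ _ _ _ (Ag Hlet (j - #|S|)).
have Ej : #|S| + (j - #|S|) = j by lia.
rewrite Ej in Hd.
have [v' [[<-] //]] := W_Good Hn (proj1 (Lw _) (ex_intro (fun k => sat_inf _ k al) _ (proj1 Hd Hj))).
Qed.

Theorem lemma7 :
  exists c : nat, 0 < c /\
  forall n : nat, 1 <= n ->
    (exists phi : form (AP n),
        in_LTL_F phi /\ fsize phi <= c * n /\
        forall w : nat -> letter n,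
          sat_inf w 0 phi <-> concat_omega (rev_lang (lang_fin (Phi n))) w)
    /\
    (forall psi : form (AP n), in_F_past psi ->
        (forall w : nat -> letter n,
          sat_inf w 0 psi <-> concat_omega (rev_lang (lang_fin (Phi n))) w) ->
        2 ^ n <= fsize psi).
Proof.
exists 16; split=> // n Hn; split.
  exists (phiF n); split.
    rewrite /=; split=> //; apply: bigAnd_LTL_F => // i /=; tauto.
  split.
    have := bigAnd_size _ _ (Lit (@Qtil n) true) (conjF n) (enum 'I_n) (fun i => erefl) (enum_ne n Hn).
    rewrite size_enum_ord => H; apply: (@leq_trans (14 * n + 2)); last lia.
    rewrite -H /= add1n !addn1 addn2; exact: leqnn.
  by move=> w; rewrite phiF_Good // concat_Good.
move=> psi [al [-> Ha]] Heq.
have Lw : forall w, (exists j, sat_inf w j al) <-> Good n w.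
  move=> w; rewrite -concat_Good // -Heq /=; split=> [[j H]|[j [_ H]]]; by exists j.
pose F (S : {set vec n}) : {ffun 'I_(fsize al) -> bool} :=
  [ffun k : 'I_(fsize al) => nth false (prof _ (W S None) #|S| al) (nat_of_ord k)].
have Finj : injective F.
  move=> S S' E.
  have Ep : prof _ (W S None) #|S| al = prof _ (W S' None) #|S'| al.
    apply: (@eq_from_nth _ false); rewrite !size_prof // => k Hk.
    by have := congr1 (fun g : {ffun 'I_(fsize al) -> bool} => g (Ordinal Hk)) E; rewrite /F !ffunE.
  apply/setP => v; apply/idP/idP; first exact: key Ep.
  exact: key (esym Ep).
have := leq_card F Finj.
rewrite card_setT' /vec !card_ffun !card_bool !card_ord leq_exp2l // => H.
rewrite /=; lia.
Qed.
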